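(* Assume $G$ is simply laced. Let $\varpi$ be a minuscule fundamental weight, $\bar\phi\in W/W_{P_\varpi}$, $\phi$ the minimal length element of $\bar\phi$, $\phi=s_{\gamma_1}\cdots s_{\gamma_n}$ a reduced expression with simple roots $\gamma_k$, $\beta_k=i(\gamma_k)$, $\alpha_1=\beta_1$ and $\alpha_k=s_{\beta_1}\cdots s_{\beta_{k-1}}(\beta_k)$. Let $i,x\in[1,n]$ with $\langle\alpha_i^\vee,\alpha_x\rangle=1$. Then for all $j\in[1,n]$, $\langle\alpha_i^\vee,s_{\alpha_x}(\alpha_j)\rangle\ge -1$.
   Context: $G$ is a semisimple algebraic group with maximal torus $T$, Borel subgroup $B$, simple roots $S$, Weyl group $W$ with longest element $w_0$; $s_\alpha$ is the reflection and $\alpha^\vee$ the coroot of a root $\alpha$. The Weyl involution $i$ sends a simple root $\gamma$ to $-w_0(\gamma)$. A fundamental weight $\varpi$ is minuscule if $\langle\alpha^\vee,\varpi\rangle\le1$ for all positive roots $\alpha$; $P_\varpi$ is the associated maximal parabolic subgroup and $W_{P_\varpi}$ its Weyl group. *)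

(* Defs.v *)
From HB Require Import structures.
From mathcomp Require Import all_boot all_order all_algebra.
Set Implicit Arguments. Unset Strict Implicit. Unset Printing Implicit Defensive.
Import Order.TTheory GRing.Theory Num.Theory.
Local Open Scope ring_scope.

(* Root system of a simply laced semisimple group, given by its Cartan matrix C
   (rank r).  Vectors of V = Q (x) (root lattice) = Q (x) (weight lattice) are
   rows of coordinates in the basis of simple roots; the W-invariant form is
   (u,v) = u C v^T. *)

Definition form (r : nat) (C : 'M[rat]_r) (u v : 'rV[rat]_r) : rat :=
  \sum_(i < r) \sum_(j < r) u 0 i * C i j * v 0 j.

Definition coroot_pair (r : nat) (C : 'M[rat]_r) (a v : 'rV[rat]_r) : rat :=
  2 * form C a v / form C a a.

Definition refl (r : nat) (C : 'M[rat]_r) (a v : 'rV[rat]_r) : 'rV[rat]_r :=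
  v - coroot_pair C a v *: a.

Definition sroot (r : nat) (i : 'I_r) : 'rV[rat]_r := \row_j (i == j)%:R.

Definition wact (r : nat) (C : 'M[rat]_r) (s : seq 'I_r) (v : 'rV[rat]_r) :=
  foldr (fun i w => refl C (sroot i) w) v s.

Definition weq (r : nat) (C : 'M[rat]_r) (s t : seq 'I_r) :=
  forall v, wact C s v = wact C t v.

Definition reduced (r : nat) (C : 'M[rat]_r) (s : seq 'I_r) :=
  forall t, weq C t s -> (size s <= size t)%N.

Definition is_root (r : nat) (C : 'M[rat]_r) (a : 'rV[rat]_r) :=
  exists (s : seq 'I_r) (i : 'I_r), a = wact C s (sroot i).

Definition is_pos_root (r : nat) (C : 'M[rat]_r) (a : 'rV[rat]_r) :=
  is_root C a /\ forall j, 0 <= a 0 j.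

Definition simply_laced_cartan (r : nat) (C : 'M[rat]_r) :=
  [/\ forall i j, C i j = C j i,
      forall i, C i i = 2,
      forall i j, i != j -> C i j = 0 \/ C i j = -1
    & forall v, v != 0 -> 0 < form C v v].

Definition is_fund_weight (r : nat) (C : 'M[rat]_r) (p : 'I_r) (w : 'rV[rat]_r) :=
  forall j, coroot_pair C (sroot j) w = (j == p)%:R.

Definition minuscule (r : nat) (C : 'M[rat]_r) (w : 'rV[rat]_r) :=
  forall a, is_pos_root C a -> coroot_pair C a w <= 1.

Definition longest_word (r : nat) (C : 'M[rat]_r) (g0 : seq 'I_r) :=
  reduced C g0 /\ forall s, exists t, weq C t s /\ (size t <= size g0)%N.

(* Weyl involution i(gamma) = - w_0(gamma) *)
Definition weyl_inv (r : nat) (C : 'M[rat]_r) (g0 : seq 'I_r) (i : 'I_r) :=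
  - wact C g0 (sroot i).

(* the element represented by gam has minimal length in its coset gam W_{P_p},
   W_{P_p} being generated by the s_j, j <> p *)
Definition min_coset_rep (r : nat) (C : 'M[rat]_r) (p : 'I_r) (gam : seq 'I_r) :=
  forall u : seq 'I_r, all (fun j => j != p) u ->
  forall t, weq C t (gam ++ u) -> (size gam <= size t)%N.

(* alpha_{k+1} = s_{beta_1} ... s_{beta_k} (beta_{k+1})  (0-based index k) *)
Definition alpha_seq (r : nat) (C : 'M[rat]_r) (betas : seq 'rV[rat]_r) (k : nat) :=
  foldr (fun b v => refl C b v) (nth 0 betas k) (take k betas).

(* Main.v *)
Require Import Defs.
From mathcomp Require Import all_boot all_order all_algebra.
From mathcomp Require Import ring lra zify.
Import GRing.Theory Num.Theory.
Local Open Scope ring_scope.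
Set Implicit Arguments. Unset Strict Implicit.
Notation form := Defs.form.

Lemma formDl r (C : 'M[rat]_r) u u' v : form C (u + u') v = form C u v + form C u' v.
Proof. rewrite /Defs.form -big_split; apply: eq_bigr => i _; rewrite -big_split; apply: eq_bigr => j _.
by rewrite mxE !mulrDl. Qed.
Lemma formZl r (C : 'M[rat]_r) a u v : form C (a *: u) v = a * form C u v.
Proof. rewrite /Defs.form mulr_sumr; apply: eq_bigr => i _; rewrite mulr_sumr; apply: eq_bigr => j _.
by rewrite mxE !mulrA. Qed.
Lemma formNl r (C : 'M[rat]_r) u v : form C (- u) v = - form C u v.
Proof. by rewrite -scaleN1r formZl mulN1r. Qed.
Lemma formBl r (C : 'M[rat]_r) u u' v : form C (u - u') v = form C u v - form C u' v.
Proof. by rewrite formDl formNl. Qed.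
Lemma form0l r (C : 'M[rat]_r) v : form C 0 v = 0.
Proof. by rewrite -(scale0r 0) formZl mul0r. Qed.
Lemma formC r (C : 'M[rat]_r) u v : (forall i j, C i j = C j i) -> form C u v = form C v u.
Proof. move=> hC; rewrite /Defs.form exchange_big; apply: eq_bigr => i _; apply: eq_bigr => j _.
by rewrite hC; ring. Qed.
Lemma formDr r (C : 'M[rat]_r) u v v' : (forall i j, C i j = C j i) -> form C u (v + v') = form C u v + form C u v'.
Proof. by move=> hC; rewrite !(formC u) // formDl. Qed.
Lemma formZr r (C : 'M[rat]_r) a u v : (forall i j, C i j = C j i) -> form C u (a *: v) = a * form C u v.
Proof. by move=> hC; rewrite !(formC u) // formZl. Qed.
Lemma formNr r (C : 'M[rat]_r) u v : (forall i j, C i j = C j i) -> form C u (- v) = - form C u v.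
Proof. by move=> hC; rewrite !(formC u) // formNl. Qed.
Lemma formBr r (C : 'M[rat]_r) u v v' : (forall i j, C i j = C j i) -> form C u (v - v') = form C u v - form C u v'.
Proof. by move=> hC; rewrite formDr // formNr. Qed.
Lemma form_srootl r (C : 'M[rat]_r) i v : form C (sroot i) v = \sum_j C i j * v 0 j.
Proof. rewrite /Defs.form (bigD1 i) //= [X in _ + X]big1 ?addr0.
  by apply: eq_bigr => j _; rewrite mxE eqxx mul1r.
move=> k nk; apply: big1 => j _; by rewrite mxE eq_sym (negbTE nk) /= !mul0r. Qed.
Lemma form_sroot r (C : 'M[rat]_r) i j : form C (sroot i) (sroot j) = C i j.
Proof. rewrite form_srootl (bigD1 j) //= [X in _ + X]big1 ?addr0.
  by rewrite mxE eqxx mulr1.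
by move=> k nk; rewrite mxE eq_sym (negbTE nk) mulr0. Qed.
Lemma form_decomp r (C : 'M[rat]_r) u v : form C u v = \sum_i u 0 i * form C (sroot i) v.
Proof. rewrite {1}/Defs.form; apply: eq_bigr => i _; rewrite form_srootl mulr_sumr.
by apply: eq_bigr => j _; rewrite mulrA. Qed.

Lemma cp_norm2 r (C : 'M[rat]_r) a v : form C a a = 2 -> coroot_pair C a v = form C a v.
Proof. by move=> H; rewrite /coroot_pair H mulrAC divff ?mul1r. Qed.
Lemma refl_form r (C : 'M[rat]_r) a v : form C a a = 2 -> refl C a v = v - form C a v *: a.
Proof. by move=> H; rewrite /refl cp_norm2. Qed.
Lemma refl_iso r (C : 'M[rat]_r) a u v : (forall i j, C i j = C j i) -> form C a a = 2 ->
  form C (refl C a u) (refl C a v) = form C u v.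
Proof. move=> hC H; rewrite !refl_form // formBl !formBr // !formZl !formZr // H (formC u a) //.
ring. Qed.
Lemma refl_inv r (C : 'M[rat]_r) a v : (forall i j, C i j = C j i) -> form C a a = 2 ->
  refl C a (refl C a v) = v.
Proof. move=> hC H; rewrite !refl_form // formBr // formZr // H.
by apply/rowP => j; rewrite !mxE; ring. Qed.
Lemma refl_adj r (C : 'M[rat]_r) a u v : (forall i j, C i j = C j i) -> form C a a = 2 ->
  form C (refl C a u) v = form C u (refl C a v).
Proof. move=> hC H; rewrite !refl_form // formBl formBr // formZl formZr // (formC u a) //; ring. Qed.
Lemma reflD r (C : 'M[rat]_r) a x y : (forall i j, C i j = C j i) ->
  refl C a (x + y) = refl C a x + refl C a y.
Proof. move=> hC; rewrite /refl /coroot_pair formDr //.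
by apply/rowP => j; rewrite !mxE; ring. Qed.
Lemma reflZ r (C : 'M[rat]_r) a c x : (forall i j, C i j = C j i) ->
  refl C a (c *: x) = c *: refl C a x.
Proof. move=> hC; rewrite /refl /coroot_pair formZr //.
by apply/rowP => j; rewrite !mxE; ring. Qed.

Lemma wact_cat r (C : 'M[rat]_r) s t v : wact C (s ++ t) v = wact C s (wact C t v).
Proof. by rewrite /wact foldr_cat. Qed.
Lemma wact_cons r (C : 'M[rat]_r) i s v : wact C (i :: s) v = refl C (sroot i) (wact C s v).
Proof. by []. Qed.
Lemma wact_nil r (C : 'M[rat]_r) v : wact C [::] v = v.
Proof. by []. Qed.
Lemma sroot_norm r (C : 'M[rat]_r) i : (forall i, C i i = 2) -> form C (sroot i) (sroot i) = 2.
Proof. by move=> hd; rewrite form_sroot hd. Qed.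

Lemma wact_iso r (C : 'M[rat]_r) s u v : (forall i j, C i j = C j i) -> (forall i, C i i = 2) ->
  form C (wact C s u) (wact C s v) = form C u v.
Proof. move=> hC hd; elim: s => //= i s IH; by rewrite refl_iso ?sroot_norm. Qed.
Lemma wact_inv r (C : 'M[rat]_r) s v : (forall i j, C i j = C j i) -> (forall i, C i i = 2) ->
  wact C (rev s) (wact C s v) = v.
Proof. move=> hC hd; elim: s v => //= i s IH v.
by rewrite rev_cons -cats1 wact_cat /= refl_inv ?sroot_norm. Qed.
Lemma wact_inv' r (C : 'M[rat]_r) s v : (forall i j, C i j = C j i) -> (forall i, C i i = 2) ->
  wact C s (wact C (rev s) v) = v.
Proof. by move=> hC hd; rewrite -{1}(revK s) wact_inv. Qed.
Lemma wactD r (C : 'M[rat]_r) s x y : (forall i j, C i j = C j i) ->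
  wact C s (x + y) = wact C s x + wact C s y.
Proof. move=> hC; elim: s => //= i s IH; by rewrite IH reflD. Qed.
Lemma wactZ r (C : 'M[rat]_r) s c x : (forall i j, C i j = C j i) ->
  wact C s (c *: x) = c *: wact C s x.
Proof. move=> hC; elim: s => //= i s IH; by rewrite IH reflZ. Qed.
Lemma wactN r (C : 'M[rat]_r) s x : (forall i j, C i j = C j i) ->
  wact C s (- x) = - wact C s x.
Proof. by move=> hC; rewrite -scaleN1r wactZ // scaleN1r. Qed.
Lemma wactB r (C : 'M[rat]_r) s x y : (forall i j, C i j = C j i) ->
  wact C s (x - y) = wact C s x - wact C s y.
Proof. by move=> hC; rewrite wactD // wactN. Qed.
Lemma wact_adj r (C : 'M[rat]_r) s u v : (forall i j, C i j = C j i) -> (forall i, C i i = 2) ->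
  form C (wact C s u) v = form C u (wact C (rev s) v).
Proof. by move=> hC hd; rewrite -{1}(wact_inv' s v hC hd) wact_iso. Qed.
Lemma refl_wact r (C : 'M[rat]_r) s a v : (forall i j, C i j = C j i) -> (forall i, C i i = 2) ->
  refl C (wact C s a) (wact C s v) = wact C s (refl C a v).
Proof. move=> hC hd; rewrite /refl /coroot_pair !wact_iso // wactB // wactZ //. Qed.
Import Order.TTheory.

Definition intvec r (v : 'rV[rat]_r) := forall j, v 0 j \is a Num.int.

Lemma int_ge1 (x : rat) : x \is a Num.int -> 0 < x -> 1 <= x.
Proof. move=> xi x0; rewrite -(ger0_norm (ltW x0)); apply: norm_intr_ge1 => //.
by rewrite gt_eqF. Qed.

Lemma sym_sum r (f : 'I_r -> 'I_r -> rat) : (forall i j, f i j = f j i) ->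
  \sum_(i < r) \sum_(j < r) f i j = \sum_(i < r) f i i + 2 * \sum_(i < r) \sum_(j < r | (j < i)%N) f i j.
Proof.
move=> hf.
have E : forall i : 'I_r, \sum_(j < r) f i j = f i i + (\sum_(j < r | (j < i)%N) f i j + \sum_(j < r | (i < j)%N) f i j).
  move=> i; rewrite (bigD1 i) //=; congr (_ + _).
  rewrite (bigID (fun j : 'I_r => (j < i)%N)) /=; congr (_ + _); apply: eq_bigl => j.
    by rewrite -val_eqE /=; case: ltngtP.
  by rewrite -val_eqE /=; case: ltngtP.
rewrite (eq_bigr _ (fun i _ => E i)) big_split /= big_split /=; congr (_ + _).
suff -> : \sum_(i < r) \sum_(j < r | (i < j)%N) f i j = \sum_(i < r) \sum_(j < r | (j < i)%N) f i j by ring.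
rewrite (eq_bigr (fun i : 'I_r => \sum_(j < r) (if (i < j)%N then f i j else 0))); last by move=> i _; rewrite big_mkcond.
rewrite exchange_big; apply: eq_bigr => j _; rewrite [RHS]big_mkcond; apply: eq_bigr => i _.
by rewrite hf.
Qed.

Lemma cartan_int r (C : 'M[rat]_r) : simply_laced_cartan C -> forall i j, C i j \is a Num.int.
Proof. case=> hC hd ho _ i j; case: (eqVneq i j) => [->|nij]; first by rewrite hd.
by case: (ho i j nij) => ->; rewrite ?rpredN. Qed.

Lemma cartan_off r (C : 'M[rat]_r) : simply_laced_cartan C -> forall i j, i != j -> C i j <= 0.
Proof. by case=> hC hd ho _ i j nij; case: (ho i j nij) => ->. Qed.

Lemma form_int r (C : 'M[rat]_r) u v : simply_laced_cartan C -> intvec u -> intvec v ->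
  form C u v \is a Num.int.
Proof. move=> hS hu hv; apply: rpred_sum => i _; apply: rpred_sum => j _.
by rewrite !rpredM // cartan_int. Qed.

Lemma sroot_int r (i : 'I_r) : intvec (sroot i).
Proof. by move=> j; rewrite mxE; case: (i == j) => //=; rewrite ?rpred0 ?rpred1. Qed.

Lemma wact_int r (C : 'M[rat]_r) s v : simply_laced_cartan C -> intvec v -> intvec (wact C s v).
Proof. move=> hS; have [hC hd _ _] := hS; elim: s => //= i s IH hv.
rewrite refl_form ?sroot_norm // => j; rewrite !mxE.
apply: rpredB; first exact: IH.
apply: rpredM; last by have := sroot_int i j; rewrite mxE.
by apply: form_int => //; [exact: sroot_int | exact: IH].
Qed.

Lemma form_even r (C : 'M[rat]_r) a : simply_laced_cartan C -> intvec a ->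
  exists2 q, q \is a Num.int & form C a a = 2 * q.
Proof.
move=> hS ha; have [hC hd _ _] := hS.
rewrite /Defs.form (@sym_sum _ (fun i j => a 0 i * C i j * a 0 j)); last first.
  by move=> i j; rewrite hC; ring.
exists (\sum_(i < r) a 0 i * a 0 i + \sum_(i < r) \sum_(j < r | (j < i)%N) a 0 i * C i j * a 0 j).
  by rewrite rpredD // rpred_sum // => i _; rewrite ?rpred_sum // => *; rewrite ?rpredM ?cartan_int.
rewrite mulrDr; congr (_ + _); rewrite mulr_sumr; apply: eq_bigr => i _; rewrite hd; ring.
Qed.

Lemma norm_ge2 r (C : 'M[rat]_r) a : simply_laced_cartan C -> intvec a -> a != 0 -> 2 <= form C a a.
Proof.
move=> hS ha a0; have [_ _ _ hP] := hS; have [q qi E] := form_even hS ha.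
have h := hP a a0; rewrite E in h *.
have q0 : 0 < q by lra.
have := int_ge1 qi q0; lra.
Qed.

Lemma sign_coh r (C : 'M[rat]_r) v : simply_laced_cartan C -> intvec v -> form C v v = 2 ->
  (forall j, 0 <= v 0 j) \/ (forall j, v 0 j <= 0).
Proof.
move=> hS hv h2; have [hC hd _ _] := hS.
pose a := \row_j (if 0 <= v 0 j then v 0 j else 0).
pose b := \row_j (if 0 <= v 0 j then 0 else - v 0 j).
have ev : v = a - b by apply/rowP => j; rewrite !mxE; case: ifP => _; ring.
have ia : intvec a by move=> j; rewrite mxE; case: ifP => _; rewrite ?rpred0.
have ib : intvec b by move=> j; rewrite mxE; case: ifP => _; rewrite ?rpred0 ?rpredN.
have ga : forall j, 0 <= a 0 j.
  by move=> j; rewrite mxE; case: ifP => // /negbT; rewrite -ltNge => /ltW.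
have gb : forall j, 0 <= b 0 j.
  by move=> j; rewrite mxE; case: ifP => // /negbT; rewrite -ltNge oppr_ge0 => /ltW.
have ab : form C a b <= 0.
  rewrite /Defs.form; apply: sumr_le0 => i _; apply: sumr_le0 => j _.
  case: (eqVneq i j) => [<-|nij].
    by rewrite !mxE; case: ifP => _; rewrite ?mulr0 ?mul0r.
  exact: mulr_le0_ge0 (mulr_ge0_le0 (ga i) (cartan_off hS nij)) (gb j).
have E : form C v v = form C a a + form C b b - 2 * form C a b.
  by rewrite ev formBl !formBr // (formC b a) //; ring.
case: (eqVneq a 0) => [a0|a0].
  right => j; have := congr1 (fun m : 'rV[rat]_r => m 0 j) a0; rewrite !mxE.
  case: ifP => h; first by move=> ->.
  by move=> _; move/negbT: h; rewrite -ltNge => /ltW.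
case: (eqVneq b 0) => [b0|b0].
  left => j; have := congr1 (fun m : 'rV[rat]_r => m 0 j) b0; rewrite !mxE.
  case: ifP => h //; move/eqP; rewrite oppr_eq0 => /eqP e.
  by rewrite e lexx in h.
have := norm_ge2 hS ia a0; have := norm_ge2 hS ib b0; lra.
Qed.

Lemma root_int r (C : 'M[rat]_r) s i : simply_laced_cartan C -> intvec (wact C s (sroot i)).
Proof. by move=> hS; apply: wact_int => //; apply: sroot_int. Qed.
Lemma root_norm r (C : 'M[rat]_r) s i : simply_laced_cartan C ->
  form C (wact C s (sroot i)) (wact C s (sroot i)) = 2.
Proof. by case=> hC hd _ _; rewrite wact_iso // sroot_norm. Qed.

Lemma refl_sroot_coord r (C : 'M[rat]_r) j v k : (forall i, C i i = 2) ->
  refl C (sroot j) v 0 k = v 0 k - form C (sroot j) v * (j == k)%:R.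
Proof. by move=> hd; rewrite refl_form ?sroot_norm // !mxE. Qed.

Lemma single r (C : 'M[rat]_r) (th : 'rV[rat]_r) j : simply_laced_cartan C ->
  (forall k, k != j -> th 0 k = 0) -> form C th th = 2 -> 0 <= th 0 j -> th = sroot j.
Proof.
move=> hS hk h2 hj; have [hC hd _ _] := hS.
have E : th = th 0 j *: sroot j.
  apply/rowP => k; rewrite !mxE; case: (eqVneq j k) => [<-|njk]; first by rewrite mulr1.
  by rewrite mulr0 hk // eq_sym.
move: h2; rewrite E formZl formZr // sroot_norm // => h.
have x1 : th 0 j = 1 by nra.
by rewrite x1 scale1r.
Qed.

Lemma pos_flip r (C : 'M[rat]_r) s i j : simply_laced_cartan C ->
  (forall k, 0 <= wact C s (sroot i) 0 k) ->
  ~~ [forall k, 0 <= refl C (sroot j) (wact C s (sroot i)) 0 k] ->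
  wact C s (sroot i) = sroot j.
Proof.
move=> hS hp hn; have [hC hd _ _] := hS.
have := sign_coh hS (root_int (j :: s) i hS) (root_norm (j :: s) i hS).
case=> /= h.
  by move: hn; rewrite negb_forall => /existsP [k]; rewrite h.
apply: (single hS); last exact: hp; last exact: root_norm.
move=> k nk; have := h k; rewrite refl_sroot_coord // eq_sym (negbTE nk) mulr0 subr0 => h1.
by apply/eqP; rewrite eq_le h1 hp.
Qed.

Lemma exists_step (P : nat -> bool) L : P 0%N -> ~~ P L ->
  exists m, [/\ (m < L)%N, P m & ~~ P m.+1].
Proof.
elim: L => [|L IH] h0 hL; first by rewrite h0 in hL.
case hPL: (P L).
  by exists L; split.
have [m [h1 h2 h3]] := IH h0 (negbT hPL); by exists m; split => //; exact: ltnW.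
Qed.

Lemma refl_conj r (C : 'M[rat]_r) s a v : (forall i j, C i j = C j i) -> (forall i, C i i = 2) ->
  refl C (wact C s a) v = wact C s (refl C a (wact C (rev s) v)).
Proof. by move=> hC hd; rewrite -refl_wact // wact_inv'. Qed.

Lemma tail_pos r (C : 'M[rat]_r) g pre a t : simply_laced_cartan C -> reduced C g ->
  g = pre ++ a :: t -> forall k, 0 <= wact C (rev t) (sroot a) 0 k.
Proof.
move=> hS hred eg; have [hC hd _ _] := hS.
apply/forallP; apply: contraT => hneg.
pose P m := [forall k, 0 <= wact C (rev (take m t)) (sroot a) 0 k].
have P0 : P 0%N by apply/forallP => k; rewrite take0 /= mxE; case: (a == k).
have PL : ~~ P (size t) by rewrite /P take_size.
have [m [hm Pm Pm1]] := exists_step P0 PL.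
pose b := nth a t m.
have tk : take m.+1 t = rcons (take m t) b by rewrite (take_nth a).
move: Pm1; rewrite /P tk rev_rcons /= => Pm1.
have eb := pos_flip hS (fun k => (forallP Pm) k) Pm1.
have key : forall v, wact C (a :: take m t ++ [:: b]) v = wact C (take m t) v.
  move=> v; rewrite wact_cons wact_cat /= -eb refl_conj // revK.
  by rewrite wact_inv' // refl_inv ?sroot_norm.
have et : a :: t = (a :: take m t ++ [:: b]) ++ drop m.+1 t.
  by rewrite /= -catA /= /b -drop_nth // cat_take_drop.
have hw : weq C (pre ++ take m t ++ drop m.+1 t) g.
  by move=> v; rewrite eg et !wact_cat key.
have := hred _ hw.
rewrite eg !size_cat /= size_take size_drop hm; lia.
Qed.

Lemma sum_delta r (j : 'I_r) : \sum_(k < r) ((j == k)%:R : rat) = 1.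
Proof. rewrite (bigD1 j) //= eqxx big1 ?addr0 // => k nk; by rewrite eq_sym (negbTE nk). Qed.

Lemma nonzero_coord r (th : 'rV[rat]_r) : th != 0 -> exists j, th 0 j != 0.
Proof.
move=> h; case: (pickP (fun j => th 0 j != 0)) => [j hj|hn]; first by exists j.
have e : th = 0.
  by apply/rowP => j; rewrite mxE; apply/eqP; move: (hn j) => /negbT; rewrite negbK.
by rewrite e eqxx in h.
Qed.

Lemma offp_root r (C : 'M[rat]_r) p N (th : 'rV[rat]_r) : simply_laced_cartan C -> intvec th ->
  form C th th = 2 -> (forall k, 0 <= th 0 k) -> th 0 p = 0 -> \sum_k th 0 k <= N%:R ->
  exists s i, [/\ all (fun j => j != p) s, i != p & th = wact C s (sroot i)].
Proof.
move=> hS; have [hC hd _ _] := hS.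
elim: N th => [|N IH] th hi h2 hp hp0 hN.
  have th0 : th != 0 by apply/eqP => e; move: h2; rewrite e form0l.
  have [j hj] := nonzero_coord th0.
  have hj' : 0 < th 0 j by rewrite lt_def hj hp.
  have : th 0 j <= \sum_k th 0 k.
    rewrite (bigD1 j) //= lerDl; apply: sumr_ge0 => k _; exact: hp.
  move: hN; rewrite /=; lra.
case: (pickP (fun j => (0 < th 0 j) && (0 < form C (sroot j) th))) => [j /andP [h1 hf] | hnone]; last first.
  have : form C th th <= 0.
    rewrite form_decomp; apply: sumr_le0 => j _.
    move: (hnone j) => /negbT; rewrite negb_and -!leNgt => /orP [h|h].
      have e : th 0 j = 0 by apply/eqP; rewrite eq_le h hp.
      by rewrite e mul0r.
    exact: mulr_ge0_le0 (hp j) h.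
  by rewrite h2.
have ci : form C (sroot j) th \is a Num.int by apply: form_int => //; apply: sroot_int.
have c1 := int_ge1 ci hf.
have jp : j != p by apply/eqP => e; move: h1; rewrite e hp0 ltxx.
case: (eqVneq th (sroot j)) => [->|nth].
  by exists [::], j; split.
pose th' := refl C (sroot j) th.
have co : forall k, th' 0 k = th 0 k - form C (sroot j) th * (j == k)%:R.
  by move=> k; rewrite refl_sroot_coord.
have hi' : intvec th' by apply: (wact_int [:: j] hS hi).
have h2' : form C th' th' = 2 by rewrite refl_iso ?sroot_norm.
have hp' : forall k, 0 <= th' 0 k.
  case: (sign_coh hS hi' h2') => // hneg.
  case/eqP: nth; apply: (single hS); [|exact: h2|exact: hp].
  move=> k nk; have := hneg k; rewrite co eq_sym (negbTE nk) mulr0 subr0 => hk.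
  by apply/eqP; rewrite eq_le hk hp.
have hp0' : th' 0 p = 0 by rewrite co (negbTE jp) mulr0 subr0.
have hs : \sum_k th' 0 k = \sum_k th 0 k - form C (sroot j) th.
  rewrite (eq_bigr (fun k => th 0 k - form C (sroot j) th * (j == k)%:R)) => [|k _]; last exact: co.
  by rewrite sumrB -mulr_sumr sum_delta mulr1.
have hN' : \sum_k th' 0 k <= N%:R.
  have e1 : (N.+1)%:R = N%:R + 1 :> rat by rewrite -addn1 natrD.
  move: hN; rewrite e1 hs; lra.
have [s [i [hs1 hs2 hs3]]] := IH th' hi' h2' hp' hp0' hN'.
exists (j :: s), i; split => //=; first by rewrite jp.
by rewrite -hs3 /th' refl_inv ?sroot_norm.
Qed.

Lemma c_one r (C : 'M[rat]_r) p varpi g pre a t : simply_laced_cartan C ->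
  is_fund_weight C p varpi -> minuscule C varpi -> reduced C g -> min_coset_rep C p g ->
  g = pre ++ a :: t -> form C (sroot a) (wact C t varpi) = 1.
Proof.
move=> hS hfw hmu hred hmin eg; have [hC hd _ _] := hS.
pose th := wact C (rev t) (sroot a).
have pos : forall k, 0 <= th 0 k := tail_pos hS hred eg.
have E : form C (sroot a) (wact C t varpi) = form C th varpi by rewrite /th wact_adj // revK.
have fw : forall j, form C (sroot j) varpi = (j == p)%:R.
  by move=> j; rewrite -(hfw j) cp_norm2 ?sroot_norm.
have Ep : form C th varpi = th 0 p.
  rewrite form_decomp (bigD1 p) //= fw eqxx mulr1 big1 ?addr0 // => k nk.
  by rewrite fw (negbTE nk) mulr0.
have hi : intvec th := root_int (rev t) a hS.
have h2 : form C th th = 2 := root_norm (rev t) a hS.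
have ne : th 0 p != 0.
  apply/eqP => hp0.
  have /natrP [N eN] : \sum_k th 0 k \is a Num.nat.
    by rewrite -intrEge0 ?sumr_ge0 // ?rpred_sum.
  have hN : \sum_k th 0 k <= N%:R by rewrite eN.
  have [s [i [hs1 hs2 hs3]]] := offp_root hS hi h2 pos hp0 hN.
  have hall : all (fun j => j != p) (s ++ i :: rev s) by rewrite all_cat /= hs2 hs1 all_rev hs1.
  have hw : weq C (pre ++ t) (g ++ (s ++ i :: rev s)).
    move=> v; rewrite eg -catA !wact_cat !wact_cons -refl_conj // -hs3.
    by rewrite /th refl_conj // revK wact_inv' // refl_inv ?sroot_norm.
  have := hmin _ hall _ hw; rewrite eg !size_cat /=; lia.
have c1 : 1 <= th 0 p by apply: int_ge1; [exact: hi | rewrite lt_def ne pos].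
have : coroot_pair C th varpi <= 1.
  by apply: hmu; split => //; exists (rev t), a.
rewrite cp_norm2 // Ep E => h; rewrite Ep; lra.
Qed.

Lemma reflN r (C : 'M[rat]_r) a v : (forall i j, C i j = C j i) -> refl C (- a) v = refl C a v.
Proof. move=> hC; rewrite /refl /coroot_pair formNl formNr // formNl opprK.
by apply/rowP => k; rewrite !mxE; ring. Qed.

Lemma foldr_betas r (C : 'M[rat]_r) g0 s x : (forall i j, C i j = C j i) -> (forall i, C i i = 2) ->
  foldr (fun b v => refl C b v) x (map (weyl_inv C g0) s) = wact C g0 (wact C s (wact C (rev g0) x)).
Proof.
move=> hC hd; elim: s => [|i s IH] /=; first by rewrite wact_inv'.
by rewrite IH /weyl_inv reflN // refl_wact.
Qed.

Lemma delta_mu r (C : 'M[rat]_r) p varpi g x0 k : simply_laced_cartan C ->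
  is_fund_weight C p varpi -> minuscule C varpi -> reduced C g -> min_coset_rep C p g ->
  (k < size g)%N ->
  form C (wact C (take k g) (sroot (nth x0 g k))) (wact C g varpi) = -1.
Proof.
move=> hS hfw hmu hred hmin hk; have [hC hd _ _] := hS.
have eg : g = take k g ++ nth x0 g k :: drop k.+1 g by rewrite -drop_nth // cat_take_drop.
have c1 := c_one hS hfw hmu hred hmin eg.
rewrite {3}eg wact_cat wact_cons wact_iso // -refl_adj ?sroot_norm //.
rewrite refl_form ?sroot_norm // formBl formZl c1; ring.
Qed.

Unset Implicit Arguments. Set Strict Implicit.

Theorem mainTheorem6 (r : nat) (C : 'M[rat]_r) (p : 'I_r) (varpi : 'rV[rat]_r)
    (g0 gam : seq 'I_r) :
  simply_laced_cartan C ->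
  is_fund_weight C p varpi -> minuscule C varpi ->
  longest_word C g0 ->
  reduced C gam -> min_coset_rep C p gam ->
  let betas := map (weyl_inv C g0) gam in
  let n := size gam in
  forall i x : nat, (i < n)%N -> (x < n)%N ->
  coroot_pair C (alpha_seq C betas i) (alpha_seq C betas x) = 1 ->
  forall j : nat, (j < n)%N ->
  -1 <= coroot_pair C (alpha_seq C betas i)
          (refl C (alpha_seq C betas x) (alpha_seq C betas j)).
Proof.
move=> hS hfw hmu _ hred hmin betas n i x hi hx hix j hj.
have [hC hd _ hP] := hS.
have x0 : 'I_r by move: hi; rewrite /n; case: (gam) => [|y l].

pose dl k := wact C (take k gam) (sroot (nth x0 gam k)).
have ealpha : forall k, (k < n)%N -> alpha_seq C betas k = - wact C g0 (dl k).
  move=> k hk; rewrite /alpha_seq /betas -map_take foldr_betas // (nth_map x0) //.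
  by rewrite /weyl_inv wactN // wact_inv // !wactN.
have F : forall a b, (a < n)%N -> (b < n)%N ->
    form C (alpha_seq C betas a) (alpha_seq C betas b) = form C (dl a) (dl b).
  by move=> a b ha hb; rewrite !ealpha // formNl formNr // opprK wact_iso.
have N2 : forall a, (a < n)%N -> form C (alpha_seq C betas a) (alpha_seq C betas a) = 2.
  by move=> a ha; rewrite F // root_norm.
have mu : forall a, (a < n)%N -> form C (dl a) (wact C gam varpi) = -1.
  by move=> a ha; apply: delta_mu.
have I : forall a b, form C (dl a) (dl b) \is a Num.int.
  by move=> a b; apply: form_int => //; apply: root_int.
rewrite cp_norm2 ?N2 // refl_form ?N2 // formBr // formZr //.
move: hix; rewrite cp_norm2 ?N2 // => hix; rewrite hix mulr1 !F //.
move: hix; rewrite F // => hix.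
set d := dl x - dl i - dl j.
have dmu : form C d (wact C gam varpi) = 1 by rewrite /d !formBl !mu //; ring.
have d0 : d != 0 by apply/eqP => e; move: dmu; rewrite e form0l => /eqP; rewrite eq_sym oner_eq0.
have := hP d d0.
have nx : form C (dl x) (dl x) = 2 by apply: root_norm.
have ni : form C (dl i) (dl i) = 2 by apply: root_norm.
have nj : form C (dl j) (dl j) = 2 by apply: root_norm.
rewrite /d !formBl !formBr // nx ni nj (formC (dl x) (dl i)) // (formC (dl j) (dl i)) //.
rewrite (formC (dl j) (dl x)) // hix => hpos.
have hI : 2 - (form C (dl x) (dl j) - form C (dl i) (dl j)) \is a Num.int.
  by rewrite rpredB ?rpredB ?I // rpred_nat.
have := int_ge1 hI; lra.
Qed.
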